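(* There exist universal positive constants $\alpha,\beta,\gamma$ such that the following holds. Let $n\ge 2$, $K\in T^n$, $r\in(0,1)$ and $\varepsilon\in(0,1/25)$, and assume that \begin{itemize} \item $rD_n\subseteq K$, and \item $(1-\varepsilon)D_n\subseteq K+2\sqrt{\varepsilon}\,D_n$. \end{itemize} Then there exist a number $N\le \alpha+\beta|\log\varepsilon|+\gamma|\log r|$ and directions $u_1,\dots,u_N\in S^{n-1}$ such that $\tilde K:=M_{u_N}\circ\cdots\circ M_{u_1}(K)$ satisfies \[ (1-4\sqrt{\varepsilon})D_n\subseteq \tilde K . \]
   Context: $D_n$ denotes the closed Euclidean unit ball in $\mathbb R^n$, $S^{n-1}$ the unit sphere, and $+$ the Minkowski sum. A nonempty compact set $K\subset\mathbb R^n$ is called star shaped if $x\in K$ implies that the segment $[0,x]\subseteq K$; $T^n$ denotes the family of star shaped sets in $\mathbb R^n$. For $u\in S^{n-1}$, $R_u$ denotes the reflection with respect to the hyperplane $u^\perp$, and the Minkowski symmetrization of a set $K$ in direction $u$ is $M_u(K)=\frac{K+R_uK}{2}$ ($K$ need not be convex). *)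

(* Defs.v *)
From mathcomp Require Import all_boot.
From Stdlib Require Import Reals.
Set Implicit Arguments.
Unset Strict Implicit.

Local Open Scope R_scope.

Definition vec (n : nat) := 'I_n -> R.

Definition vadd {n} (x y : vec n) : vec n := fun i => x i + y i.
Definition vsub {n} (x y : vec n) : vec n := fun i => x i - y i.
Definition vscale {n} (t : R) (x : vec n) : vec n := fun i => t * x i.
Definition vzero {n} : vec n := fun _ => 0.

Definition dot {n} (x y : vec n) : R := \big[Rplus/0]_(i < n) (x i * y i).
Definition vnorm {n} (x : vec n) : R := sqrt (dot x x).

Definition vset (n : nat) := vec n -> Prop.
Definition vsubset {n} (A B : vset n) : Prop := forall x, A x -> B x.

Definition cball (n : nat) (t : R) : vset n := fun x => vnorm x <= t.

Arguments cball n t x : clear implicits.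

Definition msum {n} (A B : vset n) : vset n :=
  fun x => exists a b, A a /\ B b /\ x = vadd a b.
Definition sscale {n} (t : R) (A : vset n) : vset n :=
  fun x => exists a, A a /\ x = vscale t a.
Definition simage {n} (f : vec n -> vec n) (A : vset n) : vset n :=
  fun x => exists a, A a /\ x = f a.

Definition closed_set {n} (K : vset n) : Prop :=
  forall x, (forall e, 0 < e -> exists y, K y /\ vnorm (vsub x y) < e) -> K x.
Definition bounded_set {n} (K : vset n) : Prop :=
  exists M, forall x, K x -> vnorm x <= M.
Definition compact_set {n} (K : vset n) : Prop := closed_set K /\ bounded_set K.

(* T^n : nonempty compact star shaped (w.r.t. 0) sets *)
Definition star_shaped {n} (K : vset n) : Prop :=
  (exists x, K x) /\ compact_set K /\
  (forall x, K x -> forall t, 0 <= t <= 1 -> K (vscale t x)).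

Definition on_sphere {n} (u : vec n) : Prop := vnorm u = 1.

(* Reflection in the hyperplane u^perp (u a unit vector) *)
Definition refl {n} (u : vec n) (x : vec n) : vec n :=
  vsub x (vscale (2 * dot x u) u).

Definition minksym {n} (u : vec n) (K : vset n) : vset n :=
  sscale (1/2) (msum K (simage (refl u) K)).

(* iter_minksym [u1; ...; uN] K = M_{uN} o ... o M_{u1} (K) *)
Fixpoint iter_minksym {n} (us : list (vec n)) (K : vset n) : vset n :=
  match us with
  | nil => K
  | cons u us' => iter_minksym us' (minksym u K)
  end.

(* Main.v *)
Require Import Defs.
From Stdlib Require Import Reals List.
Module Aux.
From mathcomp Require Import all_boot.
From Stdlib Require Import Reals Lra FunctionalExtensionality.
Local Open Scope R_scope.
Set Implicit Arguments.
Unset Strict Implicit.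

Lemma sum_lin3 n (F G H : 'I_n -> R) a b c :
  \big[Rplus/0]_(i < n) (a * F i + b * G i + c * H i) =
  a * \big[Rplus/0]_(i < n) F i + b * \big[Rplus/0]_(i < n) G i + c * \big[Rplus/0]_(i < n) H i.
Proof.
elim: n F G H => [|n IH] F G H; first by rewrite !big_ord0; ring.
rewrite !big_ord_recl IH; ring.
Qed.

Lemma sum_ge0 n (F : 'I_n -> R) : (forall i, 0 <= F i) -> 0 <= \big[Rplus/0]_(i < n) F i.
Proof.
elim: n F => [|n IH] F HF; first by rewrite big_ord0; lra.
rewrite big_ord_recl; have := HF ord0; have := IH (fun i => F (lift ord0 i)) (fun i => HF _); lra.
Qed.

Lemma sum_eq0 n (F : 'I_n -> R) : (forall i, F i = 0) -> \big[Rplus/0]_(i < n) F i = 0.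
Proof.
elim: n F => [|n IH] F HF; first by rewrite big_ord0.
rewrite big_ord_recl HF IH //; ring.
Qed.

Lemma dot_lin3 n (x y z w : vec n) a b c :
  (forall i, w i = a * (x i) + b * (y i) + c * (z i)) ->
  forall v : vec n, dot w v = a * dot x v + b * dot y v + c * dot z v.
Proof.
move=> Hw v; rewrite /dot -sum_lin3; apply: eq_bigr => i _; rewrite Hw; ring.
Qed.

Lemma dot_comm n (x y : vec n) : dot x y = dot y x.
Proof. rewrite /dot; apply: eq_bigr => i _; ring. Qed.

Lemma dot_ge0 n (x : vec n) : 0 <= dot x x.
Proof. apply: sum_ge0 => i; nra. Qed.

Lemma vnorm_ge0 n (x : vec n) : 0 <= vnorm x.
Proof. apply: sqrt_pos. Qed.

Lemma vnorm_sq n (x : vec n) : vnorm x * vnorm x = dot x x.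
Proof. apply: sqrt_sqrt; apply: dot_ge0. Qed.

Lemma CS n (x y : vec n) : dot x y * dot x y <= dot x x * dot y y.
Proof.
have Hq : forall l, 0 <= dot x x - 2 * l * dot x y + l * l * dot y y.
  move=> l.
  pose w : vec n := fun i => x i - l * y i.
  have E1 : forall v, dot w v = 1 * dot x v + (- l) * dot y v + 0 * dot y v.
    by apply: dot_lin3 => i; rewrite /w; ring.
  have := dot_ge0 w; rewrite E1 (dot_comm x w) (dot_comm y w) !E1 (dot_comm y x). lra.
have Hyy := dot_ge0 y; have Hxx := dot_ge0 x.
case: (Rle_lt_or_eq_dec 0 (dot y y) Hyy) => Hy.
- have := Hq (dot x y / dot y y).
  have -> : dot x x - 2 * (dot x y / dot y y) * dot x y + dot x y / dot y y * (dot x y / dot y y) * dot y y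
            = (dot x x * dot y y - dot x y * dot x y) / dot y y by field; lra.
  move=> H.
  have : 0 <= (dot x x * dot y y - dot x y * dot x y) / dot y y * dot y y by nra.
  have -> : (dot x x * dot y y - dot x y * dot x y) / dot y y * dot y y = dot x x * dot y y - dot x y * dot x y by field; lra.
  lra.
- rewrite -Hy. case: (Req_dec (dot x y) 0) => Hxy; first by rewrite Hxy; lra.
  have := Hq ((dot x x + 1) / (2 * dot x y)).
  rewrite -Hy.
  have -> : dot x x - 2 * ((dot x x + 1) / (2 * dot x y)) * dot x y + (dot x x + 1) / (2 * dot x y) * ((dot x x + 1) / (2 * dot x y)) * 0 = -1 by field.
  lra.
Qed.

Lemma dot_le_norm n (x y : vec n) : dot x y <= vnorm x * vnorm y.
Proof.
have := CS x y; rewrite -(vnorm_sq x) -(vnorm_sq y).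
have := vnorm_ge0 x; have := vnorm_ge0 y => Hb Ha H.
case: (Rle_or_lt (dot x y) (vnorm x * vnorm y)) => // Hlt.
have Hp : 0 <= vnorm x * vnorm y by nra.
have : (vnorm x * vnorm y) * (vnorm x * vnorm y) < dot x y * dot x y.
  apply: Rle_lt_trans (_ : (vnorm x * vnorm y) * dot x y < _); nra.
nra.
Qed.

Lemma norm_le_sq n (x : vec n) c : 0 <= c -> dot x x <= c * c -> vnorm x <= c.
Proof.
move=> Hc H; rewrite /vnorm -(sqrt_square c Hc); apply: sqrt_le_1_alt; lra.
Qed.

Lemma vnorm_add n (x y : vec n) : vnorm (vadd x y) <= vnorm x + vnorm y.
Proof.
apply: norm_le_sq; first by have := vnorm_ge0 x; have := vnorm_ge0 y; lra.
have E : forall v, dot (vadd x y) v = 1 * dot x v + 1 * dot y v + 0 * dot y v.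
  by apply: dot_lin3 => i; rewrite /vadd; ring.
rewrite E (dot_comm x (vadd x y)) (dot_comm y (vadd x y)) !E (dot_comm y x).
have := dot_le_norm x y; have := vnorm_sq x; have := vnorm_sq y; nra.
Qed.

Lemma vnorm_scale n (x : vec n) (c : R) : vnorm (vscale c x) = Rabs c * vnorm x.
Proof.
have Hd : dot (vscale c x) (vscale c x) = Rsqr c * dot x x.
  rewrite /dot (@eq_bigr _ _ _ _ _ _ _ (fun i => Rsqr c * (x i * x i) + 0 * (x i * x i) + 0 * (x i * x i))).
    by rewrite sum_lin3; ring.
  by move=> i _; rewrite /vscale /Rsqr; ring.
rewrite /vnorm Hd sqrt_mult_alt ?sqrt_Rsqr_abs //; apply: Rle_0_sqr.
Qed.

Lemma vsub_sym n (x y : vec n) : vnorm (vsub x y) = vnorm (vsub y x).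
Proof.
have -> : vsub x y = vscale (-1) (vsub y x).
  by apply: functional_extensionality => i; rewrite /vsub /vscale; ring.
rewrite vnorm_scale Rabs_Ropp Rabs_R1; ring.
Qed.

Section Refl.
Variable n : nat.
Variable u : vec n.
Hypothesis Hu : dot u u = 1.

Lemma dot_refl_u x : dot (refl u x) u = - dot x u.
Proof.
rewrite (@dot_lin3 _ x u u _ 1 (- (2 * dot x u)) 0); last by move=> i; rewrite /refl /vsub /vscale; ring.
rewrite Hu; ring.
Qed.

Lemma refl_invol x : refl u (refl u x) = x.
Proof.
apply: functional_extensionality => i.
have H := dot_refl_u x.
rewrite /refl /vsub /vscale in H *. rewrite H; ring.
Qed.

Lemma refl_sub x y : refl u (vsub x y) = vsub (refl u x) (refl u y).
Proof.
apply: functional_extensionality => i.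
rewrite /refl /vsub /vscale (@dot_lin3 _ x y y _ 1 (-1) 0); last by move=> j; rewrite /vsub; ring.
ring.
Qed.

Lemma refl_scale c x : refl u (vscale c x) = vscale c (refl u x).
Proof.
apply: functional_extensionality => i.
rewrite /refl /vsub /vscale (@dot_lin3 _ x x x _ c 0 0); last by move=> j; rewrite /vscale; ring.
ring.
Qed.

Lemma vnorm_refl x : vnorm (refl u x) = vnorm x.
Proof.
rewrite /vnorm; congr sqrt.
rewrite (@dot_lin3 _ x u u _ 1 (- (2 * dot x u)) 0); last by move=> i; rewrite /refl /vsub /vscale; ring.
rewrite (dot_comm u (refl u x)) dot_refl_u (dot_comm x (refl u x)).
rewrite (@dot_lin3 _ x u u _ 1 (- (2 * dot x u)) 0); last by move=> i; rewrite /refl /vsub /vscale; ring.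
rewrite (dot_comm u x); ring.
Qed.
End Refl.


Lemma Rdiv_le_0_compat a b : 0 <= a -> 0 < b -> 0 <= a / b.
Proof. move=> Ha Hb; rewrite /Rdiv; apply: Rmult_le_pos => //; left; apply: Rinv_0_lt_compat =>//. Qed.

Definition Pinv n (rho t s : R) (A : vset n) :=
  (forall x, vnorm x <= s -> A x) /\
  (forall x, vnorm x <= rho -> exists a, A a /\ vnorm (vsub x a) <= t) /\
  (forall a, A a -> forall l, 0 <= l <= 1 -> A (vscale l a)).

Lemma Pinv_mono n rho t s s' (A : vset n) : Pinv rho t s A -> s' <= s -> Pinv rho t s' A.
Proof.
move=> [H1 [H2 H3]] Hs; split; [|split] => //.
move=> x Hx; apply: H1; lra.
Qed.

Section Msym.
Variable n : nat.
Variable u : vec n.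
Hypothesis Hu : dot u u = 1.
Variables rho t s : R.
Variable A : vset n.
Hypothesis HA : Pinv rho t s A.

Lemma M_mem a b : A a -> vnorm b <= s -> minksym u A (vscale (1/2) (vadd a b)).
Proof.
move: HA => [H1 [H2 H3]] Ha Hb.
exists (vadd a b); split => //.
exists a, b; split => //; split => //.
exists (refl u b); split; last by rewrite refl_invol.
apply: H1; rewrite vnorm_refl //.
Qed.

Lemma M_approx x : vnorm x <= rho -> exists a, minksym u A a /\ vnorm (vsub x a) <= t.
Proof.
move: HA => [H1 [H2 H3]] Hx.
have [a [Ha Hxa]] := H2 x Hx.
have [a0 [Ha0 Hxa0]] := H2 (refl u x) ltac:(rewrite vnorm_refl //).
exists (vscale (1/2) (vadd a (refl u a0))); split.
  exists (vadd a (refl u a0)); split => //; exists a, (refl u a0); split => //; split => //.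
  by exists a0.
have -> : vsub x (vscale (1 / 2) (vadd a (refl u a0))) =
          vscale (1/2) (vadd (vsub x a) (refl u (vsub (refl u x) a0))).
  rewrite refl_sub // refl_invol //.
  apply: functional_extensionality => i; rewrite /vsub /vscale /vadd; field.
rewrite vnorm_scale.
have := vnorm_add (vsub x a) (refl u (vsub (refl u x) a0)).
rewrite vnorm_refl //.
have -> : Rabs (1/2) = 1/2 by apply: Rabs_right; lra.
have := vnorm_ge0 (vadd (vsub x a) (refl u (vsub (refl u x) a0))).
lra.
Qed.

Lemma M_star a : minksym u A a -> forall l, 0 <= l <= 1 -> minksym u A (vscale l a).
Proof.
move: HA => [H1 [H2 H3]] [y [[a1 [b [Ha1 [[b0 [Hb0 ->]] ->]]]] ->]] l Hl.
exists (vadd (vscale l a1) (refl u (vscale l b0))); split.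
  exists (vscale l a1), (refl u (vscale l b0)); split; first by apply: H3.
  split => //; exists (vscale l b0); split => //; by apply: H3.
rewrite refl_scale //.
apply: functional_extensionality => i; rewrite /vsub /vscale /vadd; ring.
Qed.

Lemma phase2 : 0 < rho -> t <= s -> Pinv rho t ((rho + s - t)/2) (minksym u A).
Proof.
move=> Hrho Hts.
split; last split; [| exact: M_approx | exact: M_star].
move: HA => [H1 [H2 H3]] x Hx.
have Hx0 := vnorm_ge0 x.
have [p [Hp Hxp]] : exists p, vnorm p <= rho /\ vnorm (vsub (vscale 2 x) p) <= s - t.
  case: (Rle_lt_dec (2 * vnorm x) rho) => Hc.
    exists (vscale 2 x); split; first by rewrite vnorm_scale Rabs_right; lra.
    have -> : vsub (vscale 2 x) (vscale 2 x) = vscale 0 x.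
      by apply: functional_extensionality => i; rewrite /vsub /vscale; ring.
    rewrite vnorm_scale Rabs_R0; lra.
  exists (vscale (rho / vnorm x) x); split.
    rewrite vnorm_scale Rabs_right; last by apply: Rle_ge; apply: Rdiv_le_0_compat; lra.
    field_simplify; lra.
  have -> : vsub (vscale 2 x) (vscale (rho / vnorm x) x) = vscale (2 - rho / vnorm x) x.
    by apply: functional_extensionality => i; rewrite /vsub /vscale; ring.
  rewrite vnorm_scale Rabs_right.
    have -> : (2 - rho / vnorm x) * vnorm x = 2 * vnorm x - rho by field; lra.
    lra.
  apply: Rle_ge.
  have : rho / vnorm x <= 2.
    apply: (Rmult_le_reg_r (vnorm x)); first lra.
    have -> : rho / vnorm x * vnorm x = rho by field; lra.
    lra.
  lra.
have [a [Ha Hpa]] := H2 p Hp.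
have -> : x = vscale (1/2) (vadd a (vsub (vscale 2 x) a)).
  by apply: functional_extensionality => i; rewrite /vsub /vscale /vadd; field.
apply: M_mem => //.
have -> : vsub (vscale 2 x) a = vadd (vsub (vscale 2 x) p) (vsub p a).
  by apply: functional_extensionality => i; rewrite /vsub /vscale /vadd; ring.
have := vnorm_add (vsub (vscale 2 x) p) (vsub p a); lra.
Qed.

Lemma phase1 : 0 < rho -> 0 < s -> s <= t -> Pinv rho t (s * rho / (2 * t)) (minksym u A).
Proof.
move=> Hrho Hs Hst.
split; last split; [| exact: M_approx | exact: M_star].
move: HA => [H1 [H2 H3]] x Hx.
have Hx0 := vnorm_ge0 x.
case: (Rle_lt_or_eq_dec 0 (vnorm x) Hx0) => Hxp; last first.
  have -> : x = vscale (1/2) (vadd x x).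
    by apply: functional_extensionality => i; rewrite /vscale /vadd; field.
  apply: M_mem; [apply: H1|]; lra.
pose p := vscale (rho / vnorm x) x.
have Hp : vnorm p <= rho.
  rewrite /p vnorm_scale Rabs_right; last by apply: Rle_ge; apply: Rdiv_le_0_compat; lra.
  field_simplify; lra.
have [a0 [Ha0 Hpa]] := H2 p Hp.
pose l := 2 * vnorm x / rho.
have Hl1 : l <= 1.
  rewrite /l; apply: (Rmult_le_reg_r rho) => //.
  have -> : 2 * vnorm x / rho * rho = 2 * vnorm x by field; lra.
  have : vnorm x * (2 * t) <= s * rho.
    have E : s * rho = s * rho / (2 * t) * (2 * t) by field; lra.
    rewrite E; apply: Rmult_le_compat_r; lra.
  nra.
have Hl0 : 0 <= l by rewrite /l; apply: Rdiv_le_0_compat; lra.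
have -> : x = vscale (1/2) (vadd (vscale l a0) (vsub (vscale 2 x) (vscale l a0))).
  by apply: functional_extensionality => i; rewrite /vsub /vscale /vadd; field.
apply: M_mem; first by apply: H3.
have -> : vsub (vscale 2 x) (vscale l a0) = vscale l (vsub p a0).
  apply: functional_extensionality => i; rewrite /p /l /vsub /vscale; field; lra.
rewrite vnorm_scale Rabs_right; last lra.
apply: Rle_trans (_ : l * t <= _); first by apply: Rmult_le_compat_l.
rewrite /l.
have : vnorm x * (2 * t) <= s * rho.
  have E : s * rho = s * rho / (2 * t) * (2 * t) by field; lra.
  rewrite E; apply: Rmult_le_compat_r; lra.
move=> H.
apply: (Rmult_le_reg_r rho) => //.
have -> : 2 * vnorm x / rho * t * rho = vnorm x * (2 * t) by field; lra.
nra.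
Qed.
End Msym.

Lemma exists_unit n : exists u : vec n.+1, dot u u = 1.
Proof.
exists (fun i : 'I_n.+1 => if nat_of_ord i == 0%nat then 1%R else 0%R).
rewrite /dot big_ord_recl /= sum_eq0; first ring.
move=> i; rewrite /bump /=; ring.
Qed.

End Aux.


From Stdlib Require Import Lra Lia FunctionalExtensionality ZArith.
Open Scope R_scope.

Lemma iter_repeat_add n (u : vec n) j k (A : vset n) :
  iter_minksym (repeat u (j + k)) A = iter_minksym (repeat u k) (iter_minksym (repeat u j) A).
Proof.
  revert A; induction j as [|j IH]; intros A; simpl; auto.
Qed.

Lemma Rmin_mul t r0 q : 0 < t -> 1 <= q -> Rmin t (r0 * q) <= Rmin t r0 * q.
Proof.
  intros Ht Hq; unfold Rmin; destruct (Rle_dec t (r0 * q)); destruct (Rle_dec t r0); nra.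
Qed.

Lemma iter1 n (u : vec n) (Hu : dot u u = 1) rho t (Hrho : 0 < rho) (Ht : 0 < t)
  (Hq1 : 1 <= rho / (2 * t)) :
  forall j A r0, 0 < r0 -> Aux.Pinv rho t (Rmin t r0) A ->
  Aux.Pinv rho t (Rmin t (r0 * (rho / (2 * t)) ^ j)) (iter_minksym (repeat u j) A).
Proof.
  induction j as [|j IH]; intros A r0 Hr0 HA.
  - simpl. rewrite Rmult_1_r. exact HA.
  - simpl.
    replace (r0 * (rho / (2 * t) * (rho / (2 * t)) ^ j)) with ((r0 * (rho / (2 * t))) * (rho / (2 * t)) ^ j) by ring.
    apply IH.
    + apply Rmult_lt_0_compat; lra.
    + assert (Hs : 0 < Rmin t r0) by (apply Rmin_glb_lt; lra).
      assert (H := Aux.phase1 Hu HA Hrho Hs (Rmin_l t r0)).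
      apply (Aux.Pinv_mono H).
      replace (Rmin t r0 * rho / (2 * t)) with (Rmin t r0 * (rho / (2 * t))) by (field; lra).
      apply Rmin_mul; lra.
Qed.

Lemma iter2 n (u : vec n) (Hu : dot u u = 1) rho t (Hrho : 0 < rho) (Ht : 2 * t <= rho) :
  forall j A s, t <= s -> Aux.Pinv rho t s A ->
  Aux.Pinv rho t (rho - t - (rho - t - s) / 2 ^ j) (iter_minksym (repeat u j) A).
Proof.
  induction j as [|j IH]; intros A s Hs HA.
  - simpl. apply (Aux.Pinv_mono HA). lra.
  - simpl.
    assert (H := Aux.phase2 Hu HA Hrho Hs).
    assert (H2 := IH _ ((rho + s - t) / 2) ltac:(lra) H).
    assert (Hp : 0 < 2 ^ j) by (apply pow_lt; lra).
    replace (rho - t - (rho - t - s) / (2 * 2 ^ j)) with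
      (rho - t - (rho - t - (rho + s - t) / 2) / 2 ^ j) by (field; lra).
    exact H2.
Qed.

Lemma log_bound c X : 1 < c -> 0 < X ->
  exists N : nat, X <= c ^ N /\ INR N <= / ln c * Rabs (ln X) + 1.
Proof.
  intros Hc HX.
  assert (Hlc : 0 < ln c) by (rewrite <- ln_1; apply ln_increasing; lra).
  set (Y := / ln c * Rabs (ln X)).
  assert (HY : 0 <= Y) by (unfold Y; apply Rmult_le_pos; [left; apply Rinv_0_lt_compat; lra | apply Rabs_pos]).
  destruct (archimed Y) as [H1 H2].
  assert (Hup : (0 <= up Y)%Z) by (apply le_IZR; lra).
  exists (Z.to_nat (up Y)).
  assert (HN : INR (Z.to_nat (up Y)) = IZR (up Y)) by (rewrite INR_IZR_INZ, Z2Nat.id; auto).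
  split.
  - destruct (Rle_or_lt X (c ^ Z.to_nat (up Y))) as [h|h]; auto.
    exfalso.
    assert (Hcp : 0 < c ^ Z.to_nat (up Y)) by (apply pow_lt; lra).
    assert (h2 := ln_increasing _ _ Hcp h).
    rewrite ln_pow in h2 by lra. rewrite HN in h2.
    assert (h3 : Y * ln c = Rabs (ln X)) by (unfold Y; field; lra).
    assert (h4 := Rle_abs (ln X)).
    assert (IZR (up Y) * ln c > Y * ln c) by (apply Rmult_gt_compat_r; lra).
    lra.
  - rewrite HN. fold Y. lra.
Qed.

Theorem lemma2p3 :
  exists alpha beta gamma : R,
    (0 < alpha)%R /\ (0 < beta)%R /\ (0 < gamma)%R /\
    forall (n : nat) (K : vset n) (r eps : R),
      (2 <= n)%nat ->
      star_shaped K ->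
      (0 < r < 1)%R ->
      (0 < eps < 1 / 25)%R ->
      vsubset (cball n r%R) K ->
      vsubset (cball n (1 - eps)%R) (msum K (cball n (2 * sqrt eps)%R)) ->
      exists us : list (vec n),
        (INR (length us) <= alpha + beta * Rabs (ln eps) + gamma * Rabs (ln r))%R /\
        Forall on_sphere us /\
        vsubset (cball n (1 - 4 * sqrt eps)%R) (iter_minksym us K).
Proof.
  assert (Hl2 : 0 < ln 2) by (rewrite <- ln_1; apply ln_increasing; lra).
  assert (Hl65 : 0 < ln (6/5)) by (rewrite <- ln_1; apply ln_increasing; lra).
  exists 2, (/ ln 2), (/ ln (6/5)).
  split; [lra|]. split; [apply Rinv_0_lt_compat; lra|]. split; [apply Rinv_0_lt_compat; lra|].
  intros n K r eps Hn HK Hr He Hball Happ.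
  destruct n as [|n']; [lia|].
  destruct (Aux.exists_unit n') as [u Hu].
  assert (Hse : 0 < sqrt eps) by (apply sqrt_lt_R0; lra).
  assert (Hse5 : sqrt eps < 1/5).
  { replace (1/5) with (sqrt (1/25)).
    - apply sqrt_lt_1_alt; lra.
    - replace (1/25) with ((1/5) * (1/5)) by field. apply sqrt_square; lra. }
  assert (Hss : sqrt eps * sqrt eps = eps) by (apply sqrt_sqrt; lra).
  assert (Hes : eps <= sqrt eps) by nra.
  set (t := 2 * sqrt eps). set (rho := 1 - eps).
  assert (Ht : 0 < t) by (unfold t; lra).
  assert (Hrho : 0 < rho) by (unfold rho; lra).
  assert (Hq : 6/5 <= rho / (2 * t)).
  { apply (Rmult_le_reg_r (2 * t)); [lra|].
    replace (rho / (2 * t) * (2 * t)) with rho by (field; lra).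
    unfold rho, t. lra. }
  assert (HP0 : Aux.Pinv rho t r K).
  { destruct HK as [_ [_ Hstar]].
    split; [|split].
    - intros x Hx. apply Hball. exact Hx.
    - intros x Hx. destruct (Happ x Hx) as [a [b [Ha [Hb Hxab]]]].
      exists a. split; auto.
      replace (vsub x a) with b; [exact Hb|].
      subst x. apply functional_extensionality. intro i. unfold vsub, vadd. ring.
    - intros a Ha l Hl. apply Hstar; auto. }
  destruct (log_bound (6/5) (/ r)) as [N1 [HN1a HN1b]]; [lra| apply Rinv_0_lt_compat; lra|].
  destruct (log_bound 2 (/ eps)) as [N2 [HN2a HN2b]]; [lra| apply Rinv_0_lt_compat; lra|].
  exists (repeat u (N1 + N2)).
  split; [|split].
  - rewrite repeat_length, plus_INR.
    rewrite ln_Rinv, Rabs_Ropp in HN1b by lra.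
    rewrite ln_Rinv, Rabs_Ropp in HN2b by lra.
    lra.
  - apply Forall_forall. intros y Hy. apply repeat_spec in Hy. subst y.
    unfold on_sphere, vnorm. rewrite Hu. apply sqrt_1.
  - rewrite iter_repeat_add.
    assert (HP1 := iter1 _ _ Hu _ _ Hrho Ht ltac:(lra) N1 K r ltac:(lra) (Aux.Pinv_mono HP0 (Rmin_r t r))).
    assert (Hrq : t <= r * (rho / (2 * t)) ^ N1).
    { assert (h1 : (6/5) ^ N1 <= (rho / (2 * t)) ^ N1) by (apply pow_incr; lra).
      assert (h2 : r * / r = 1) by (field; lra).
      assert (h3 : r * / r <= r * (6/5)^N1) by (apply Rmult_le_compat_l; lra).
      unfold t in *. nra. }
    rewrite Rmin_left in HP1 by exact Hrq.
    assert (H2t : 2 * t <= rho) by (unfold t, rho; lra).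
    assert (HP2 := iter2 _ _ Hu _ _ Hrho H2t N2 _ t (Rle_refl t) HP1).
    destruct HP2 as [Hb2 _].
    intros x Hx. apply Hb2. unfold cball in Hx.
    assert (Hp2 : 0 < 2 ^ N2) by (apply pow_lt; lra).
    assert (Hd : (rho - t - t) / 2 ^ N2 <= eps).
    { apply (Rmult_le_reg_r (2 ^ N2)); [lra|].
      replace ((rho - t - t) / 2 ^ N2 * 2 ^ N2) with (rho - t - t) by (field; lra).
      assert (h2 : eps * / eps = 1) by (field; lra).
      assert (h3 : eps * / eps <= eps * 2 ^ N2) by (apply Rmult_le_compat_l; lra).
      unfold rho, t. nra. }
    unfold rho, t in *. lra.
Qed.
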